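(* For any finite alphabet $\mathfrak{G}$, the initial path series of $(\mathbf{S}_\bullet(\mathfrak{G}), \mathbf{U})$ satisfies $\langle t^d, \mathbf{I}_\mathbf{U}\rangle = \sum_{n\in[1+(m_\mathfrak{G}-1)d]} \theta(d,n)$ for any $d\geq 0$, where $\theta(d,n)$ satisfies the recurrence $\theta(d,n)=0$ for any $n\leq 0$ and $d\in\mathbb{Z}$, $\theta(0,1)=1$, and $\theta(d,n) = \sum_{\mathtt{a}\in\mathfrak{G},\, |\mathtt{a}|\leq n} (n+1-|\mathtt{a}|)\,\theta(d-1, n+1-|\mathtt{a}|)$ for any $d\geq 1$ and $n\geq 1$.
   Context: $\mathfrak{G}$ is a finite alphabet (letters with arities $\geq 1$), and $m_\mathfrak{G}$ is the maximal arity of a letter of $\mathfrak{G}$. A $\mathfrak{G}$-tree is either the leaf (the tree with no internal node) or a root decorated by a letter $\mathtt{a}\in\mathfrak{G}$ with $|\mathtt{a}|$ children that are $\mathfrak{G}$-trees; its degree is its number of internal nodes and its arity $|\mathfrak{t}|$ its number of leaves. $\mathbf{S}_\bullet(\mathfrak{G})$ is the set of $\mathfrak{G}$-trees graded by degree. $\mathbf{U}(\mathfrak{t}) = \sum_{\mathtt{a}\in\mathfrak{G},\, i\in[|\mathfrak{t}|]} \mathfrak{t}\circ_i\mathtt{a}$, where $\mathfrak{t}\circ_i\mathtt{a}$ replaces the $i$-th leaf of $\mathfrak{t}$ by an internal node decorated by $\mathtt{a}$ with only leaves as children; this graded graph has the leaf as root. The initial path series is $\mathbf{I}_\mathbf{U}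 = \sum_{\mathfrak{t}} \langle\mathfrak{t},\mathbf{H}_\mathbf{U}\rangle\, t^{\deg(\mathfrak{t})}$, where $\langle\mathfrak{t},\mathbf{H}_\mathbf{U}\rangle$ is the number of paths from the leaf to $\mathfrak{t}$ in this graph; so $\langle t^d,\mathbf{I}_\mathbf{U}\rangle$ is the number of paths of length $d$ starting at the leaf. (In the proof, $\theta(d,n)$ is the number of such paths ending at trees of degree $d$ and arity $n$.) *)

(* Defs.v *)
From mathcomp Require Import all_boot all_order.
Set Implicit Arguments. Unset Strict Implicit. Unset Printing Implicit Defensive.

Section Trees.
Variable G : finType.
Variable ar : G -> nat.

(* G-trees: the leaf, or a root labelled by a letter with a list of children.
   (Well-formedness, #children = arity, holds for all trees reachable from the
   leaf by grafting, which are the only ones involved below.) *)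
Inductive tree : Type :=
| Leaf : tree
| Node : G -> seq tree -> tree.

Fixpoint tdeg (t : tree) : nat :=
  match t with
  | Leaf => 0
  | Node _ ts => (sumn (map tdeg ts)).+1
  end.

Fixpoint tarity (t : tree) : nat :=
  match t with
  | Leaf => 1
  | Node _ ts => sumn (map tarity ts)
  end.

Definition corolla (a : G) : tree := Node a (nseq (ar a) Leaf).

(* Replace the (k+1)-th leaf (left-to-right) by the corolla of a.
   The counter is [Some k] while still searching, [None] once done. *)
Fixpoint ins (a : G) (k : option nat) (t : tree) : tree * option nat :=
  match t with
  | Leaf =>
      match k with
      | Some 0 => (corolla a, None)
      | Some k'.+1 => (Leaf, Some k')
      | None => (Leaf, None)
      end
  | Node b ts =>
      let fix go (k : option nat) (ts : seq tree) : seq tree * option nat :=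
        match ts with
        | [::] => ([::], k)
        | t1 :: ts1 =>
            let (t1', k1) := ins a k t1 in
            let (ts1', k2) := go k1 ts1 in
            (t1' :: ts1', k2)
        end in
      let (ts', k') := go k ts in (Node b ts', k')
  end.

(* t o_i a, for i in [1, |t|] (1-indexed leaves) *)
Definition graft (t : tree) (i : nat) (a : G) : tree := (ins a (Some i.-1) t).1.

(* U(t) = sum_{a in G, i in [|t|]} t o_i a, as a multiset (list) of trees *)
Definition U (t : tree) : seq tree :=
  [seq graft t i a | a <- enum G, i <- iota 1 (tarity t)].

(* U^d(leaf) as a multiset: each element corresponds to exactly one path of
   length d in the graph U starting at the leaf. *)
Definition Uiter (d : nat) : seq tree :=
  iter d (fun l => flatten (map U l)) [:: Leaf].

(* <t^d, I_U> : number of paths of length d starting at the leaf *)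
Definition initial_path_coef (d : nat) : nat := size (Uiter d).

Definition max_arity : nat := \max_(a : G) ar a.

Fixpoint theta (d n : nat) : nat :=
  match d with
  | 0 => (n == 1)
  | d'.+1 =>
      if n == 0 then 0
      else \sum_(a : G | ar a <= n) (n + 1 - ar a) * theta d' (n + 1 - ar a)
  end.

End Trees.

(* Main.v *)
Require Import Defs.
From mathcomp Require Import all_boot all_order.
From mathcomp Require Import zify.

Section Proof.
Variable G : finType.
Variable ar : G -> nat.
Hypothesis ar_pos : forall a : G, 0 < ar a.

Fixpoint allPr (P : tree G -> Prop) (ts : seq (tree G)) : Prop :=
  match ts with [::] => True | t :: ts => P t /\ allPr P ts end.

Lemma tree_ind' (P : tree G -> Prop) (HL : P (Leaf G))
  (HN : forall b ts, allPr P ts -> P (Node b ts)) : forall t, P t.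
Proof.
fix IH 1. case=> [|b ts]; first exact HL.
apply: HN. elim: ts => [|t ts IHts]; first by []. split; first exact: IH. exact: IHts.
Qed.

Definition gofn (a : G) := fix go (k : option nat) (ts : seq (tree G)) {struct ts} : seq (tree G) * option nat :=
  match ts with
  | [::] => ([::], k)
  | t1 :: ts1 =>
      let (t1', k1) := ins ar a k t1 in
      let (ts1', k2) := go k1 ts1 in
      (t1' :: ts1', k2)
  end.

Lemma ins_node a k b ts :
  ins ar a k (Node b ts) = let (ts', k') := gofn a k ts in (Node b ts', k').
Proof. simpl. reflexivity. Qed.

Lemma ins_None a t : ins ar a None t = (t, None).
Proof.
elim/tree_ind': t => [|b ts H] //. rewrite ins_node.
suff -> : gofn a None ts = (ts, None) by [].
elim: ts H => [|t ts IH] //= [-> H]. by rewrite IH.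
Qed.

Definition Pins a t := forall k,
  (k < tarity t -> exists t', ins ar a (Some k) t = (t', None) /\
      tarity t' = tarity t + ar a - 1) /\
  (tarity t <= k -> ins ar a (Some k) t = (t, Some (k - tarity t))).

Lemma ins_spec a t : Pins a t.
Proof.
have := ar_pos a => Ha.
elim/tree_ind': t => [|b ts H].
  move=> [|k] /=.
    split => // _.
    exists (corolla ar a); split => //=.
    rewrite /corolla /=; elim: (ar a) => //= n ->. lia.
  split => // _. by rewrite subSS subn0.
move=> k; rewrite ins_node /=.
suff : (k < sumn (map (@tarity G) ts) -> exists ts', gofn a (Some k) ts = (ts', None) /\
      sumn (map (@tarity G) ts') = sumn (map (@tarity G) ts) + ar a - 1) /\
  (sumn (map (@tarity G) ts) <= k -> gofn a (Some k) ts = (ts, Some (k - sumn (map (@tarity G) ts)))).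
  case=> [H1 H2]; split.
    by move=> /H1 [ts' [-> E]]; exists (Node b ts').
  by move=> /H2 ->.
elim: ts H k => [|t ts IH] /=.
  by move=> _ k; split => // _; rewrite subn0.
move=> [Ht Hts] k.
split.
- case: (ltnP k (tarity t)) => hk.
    move=> _.
    case: (Ht k) => [H1 _]; case: (H1 hk) => t' [E1 E].
    rewrite /= E1.
    have -> : gofn a None ts = (ts, None).
      clear. elim: ts => [|t ts IH] //=; by rewrite ins_None IH.
    exists (t' :: ts); split => //=; rewrite E; lia.
  move=> hk2.
  case: (Ht k) => [_ /(_ hk) ->] /=.
  case: (IH Hts (k - tarity t)) => [H1 _].
  have [ts' [-> E]] : exists ts', gofn a (Some (k - tarity t)) ts = (ts', None) /\
      sumn (map (@tarity G) ts') = sumn (map (@tarity G) ts) + ar a - 1 by apply: H1; lia.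
  exists (t :: ts'); split => //=; rewrite E; lia.
- move=> hk.
  case: (Ht k) => [_ /(_ ltac:(lia)) ->] /=.
  case: (IH Hts (k - tarity t)) => [_ H2].
  rewrite H2; last lia.
  by rewrite subnDA.
Qed.

Lemma tarity_graft t i a : 1 <= i <= tarity t ->
  tarity (graft ar t i a) = tarity t + ar a - 1.
Proof.
move=> hi; rewrite /graft.
case: (ins_spec a t i.-1) => [H _].
have [t' [-> E]] := H ltac:(lia). by [].
Qed.

Lemma map_tarity_U t :
  map (@tarity G) (U ar t) = [seq tarity t + ar a - 1 | a <- enum G, i <- iota 1 (tarity t)].
Proof.
rewrite /U map_flatten -map_comp; congr flatten; apply: eq_map => a /=.
rewrite -map_comp; apply/eq_in_map => i; rewrite mem_iota => hi /=.
apply: tarity_graft; lia.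
Qed.

Lemma count_big (T : Type) (p : pred T) (s : seq T) : count p s = \sum_(x <- s) p x.
Proof. by elim: s => [|x s IH]; rewrite ?big_nil ?big_cons //= IH. Qed.

Lemma count_U t n :
  count (fun u => tarity u == n) (U ar t) =
  \sum_(a <- enum G) tarity t * (tarity t + ar a - 1 == n).
Proof.
rewrite -(count_map (@tarity G) (pred1 n)) map_tarity_U count_flatten.
rewrite sumnE !big_map; apply: eq_bigr => a _.
rewrite count_map count_big big_const_seq count_predT size_iota iter_addn_0 mulnC.
by [].
Qed.

Lemma Uiter_S d : Uiter ar d.+1 = flatten (map (U ar) (Uiter ar d)).
Proof. by rewrite /Uiter iterS. Qed.

Lemma count_Uiter d n :
  count (fun u => tarity u == n) (Uiter ar d) = theta ar d n.
Proof.
elim: d n => [|d IH] n.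
  by rewrite /Uiter /= addn0 eq_sym.
rewrite Uiter_S count_flatten sumnE !big_map /=.
under eq_bigr do rewrite count_U.
rewrite exchange_big /= big_enum /=.
case: n => [|n] /=.
  apply: big1 => a _; apply: big1 => t _.
  have := ar_pos a; case: eqP => //; lia.
rewrite [RHS]big_mkcond /=; apply: eq_bigr => a _.
rewrite -IH count_big big_distrr /=.
case: ifP => ha.
  apply: eq_bigr => t _; have := ar_pos a.
  case: eqP => e1; case: eqP => e2 /=; lia.
apply: big1 => t _; have := ar_pos a; case: eqP => //; lia.
Qed.

Lemma all_flatten (T : Type) (p : pred T) (ss : seq (seq T)) :
  all p (flatten ss) = all (all p) ss.
Proof. by elim: ss => //= s ss IH; rewrite all_cat IH. Qed.

Lemma Uiter_bound d :
  all (fun t => 1 <= tarity t <= 1 + (max_arity ar - 1) * d) (Uiter ar d).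
Proof.
elim: d => [|d IH].
  by rewrite /Uiter /=.
rewrite Uiter_S all_flatten all_map; apply: sub_all IH => t0 /= hb.
rewrite /U /= all_flatten all_map; apply: (@sub_all _ predT); last exact: all_predT. move=> a _ /=.
rewrite all_map. apply/allP => i; rewrite mem_iota => hi /=.
rewrite tarity_graft; last lia.
have := ar_pos a.
have : ar a <= max_arity ar by rewrite /max_arity; apply: (leq_bigmax a).
lia.
Qed.

Lemma size_sum_count (s : seq (tree G)) lo hi :
  all (fun t => lo <= tarity t < hi) s ->
  size s = \sum_(lo <= n < hi) count (fun u => tarity u == n) s.
Proof.
elim: s => [|t s IH] /=.
  by rewrite big1.
move=> /andP [/andP [h1 h2] H].
rewrite big_split /= -IH //.
rewrite -add1n; congr (_ + _).
rewrite (bigD1_seq (tarity t)) /=; last exact: iota_uniq.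
  rewrite eqxx /= big1 // => i ne.
  by rewrite eq_sym (negbTE ne).
by rewrite mem_index_iota h1 h2.
Qed.

End Proof.

Theorem proposition2p3 (G : finType) (ar : G -> nat)
  (ar_pos : forall a : G, 0 < ar a) (d : nat) :
  initial_path_coef ar d =
  \sum_(1 <= n < (1 + (max_arity ar - 1) * d).+1) theta ar d n.
Proof.
rewrite /initial_path_coef (@size_sum_count _ _ 1 (1 + (max_arity ar - 1) * d).+1).
  by apply: eq_bigr => n _; rewrite count_Uiter.
by have := @Uiter_bound G ar ar_pos d.
Qed.
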